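(* For each pair $(N,n)\in\{(N,1): N\ge1\}\cup\{(2,2),(3,2),(3,3)\}$ we have $\chi_n(N\times n,2)=2^N$.
   Context: $\mathbb{F}_2^{N\times n}$ is the set of $N\times n$ binary matrices. An exactly $d$-distance coloring is a map $\Gamma:\mathbb{F}_q^{N\times n}\to\{1,\dots,L\}$ such that $\Gamma(M_1)\ne\Gamma(M_2)$ whenever $\mathrm{Rk}(M_1-M_2)=d$ (rank over $\mathbb{F}_q$). $\chi_d(N\times n,q)$ denotes the minimum number $L$ of colors in an exactly $d$-distance coloring. *)

(* Defs.v *)
From HB Require Import structures.
From mathcomp Require Import all_boot all_order all_algebra all_fingroup all_field.
Set Implicit Arguments. Unset Strict Implicit. Unset Printing Implicit Defensive.
Import GRing.Theory.
Local Open Scope ring_scope.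

Definition exact_dist_coloring (F : fieldType) (N n d L : nat)
    (G : 'M[F]_(N, n) -> 'I_L) : Prop :=
  forall M1 M2 : 'M[F]_(N, n), \rank (M1 - M2) = d -> G M1 <> G M2.

(* chi_d(N x n, q) = L  iff  L is the minimum number of colors of an
   exactly d-distance coloring. *)
Definition is_chi (F : fieldType) (N n d L : nat) : Prop :=
  (exists G : 'M[F]_(N, n) -> 'I_L, exact_dist_coloring d G) /\
  (forall (L' : nat) (G : 'M[F]_(N, n) -> 'I_L'),
      exact_dist_coloring d G -> (L <= L')%N).

(* Main.v *)
Require Import Defs.
From HB Require Import structures.
From mathcomp Require Import all_boot all_order all_algebra all_fingroup all_field.
Import GRing.Theory.
Local Open Scope ring_scope.

Lemma full_of (F : fieldType) m n (D : 'M[F]_(m,n)) :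
  (forall v : 'cV_n, D *m v = 0 -> v = 0) -> \rank D = n.
Proof.
move=> H; rewrite -mxrank_tr; apply/eqP.
have -> : (\rank D^T == n) = row_free D^T by [].
rewrite -kermx_eq0; apply/eqP/row_matrixP => i; rewrite row0.
have h : row i (kermx D^T) *m D^T = 0 by rewrite -row_mul mulmx_ker row0.
apply: trmx_inj; rewrite trmx0; apply: H.
by have := congr1 trmx h; rewrite trmx_mul trmxK trmx0.
Qed.

Lemma not_full (F : fieldType) m n (D : 'M[F]_(m,n)) (v : 'cV_n) :
  v != 0 -> D *m v = 0 -> \rank D <> n.
Proof.
move=> nz h hr; move: nz; apply/negP; rewrite negbK.
have : row_free D^T by rewrite /row_free mxrank_tr hr.
rewrite -kermx_eq0 => /eqP hk.
have : (v^T <= kermx D^T)%MS.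
  by apply/sub_kermxP; rewrite -trmx_mul h trmx0.
by rewrite hk submx0 -trmx0 (inj_eq trmx_inj).
Qed.

Definition f3 (a b c : 'F_2) (i j : nat) : 'F_2 :=
  match i, j with
  | 0, 0 => a | 0, 1 => c | 0, _ => b
  | 1, 0 => b | 1, 1 => a + c | 1, _ => b + c
  | _, 0 => c | _, 1 => b | _, _ => a + c end.

Definition vals : seq 'F_2 := [:: 0; 1].
Lemma in_vals (a : 'F_2) : a \in vals.
Proof. by case: a => [[|[|?]] ?]. Qed.

Definition chk33 := all (fun a => all (fun b => all (fun c =>
  all (fun a' => all (fun b' => all (fun c' =>
  all (fun v0 => all (fun v1 => all (fun v2 =>
  let D i j := f3 a b c i j - f3 a' b' c' i j in
  let E i := D i 0%N * v0 + (D i 1%N * v1 + (D i 2%N * v2 + 0)) in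
  [&& E 0%N == 0, E 1%N == 0 & E 2%N == 0] ==>
  ((a, b, c) == (a', b', c')) || [&& v0 == 0, v1 == 0 & v2 == 0])
  vals) vals) vals) vals) vals) vals) vals) vals) vals.

Lemma chk33_ok : chk33.
Proof. vm_compute. reflexivity. Qed.

Lemma chk33P a b c a' b' c' v0 v1 v2 :
  let D i j := f3 a b c i j - f3 a' b' c' i j in
  let E i := D i 0%N * v0 + (D i 1%N * v1 + (D i 2%N * v2 + 0)) in
  E 0%N = 0 -> E 1%N = 0 -> E 2%N = 0 ->
  (a, b, c) = (a', b', c') \/ [/\ v0 = 0, v1 = 0 & v2 = 0].
Proof.
move=> D E h0 h1 h2.
move: chk33_ok => /allP/(_ a (in_vals a))/allP/(_ b (in_vals b))
  /allP/(_ c (in_vals c))/allP/(_ a' (in_vals a'))/allP/(_ b' (in_vals b'))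
  /allP/(_ c' (in_vals c'))/allP/(_ v0 (in_vals v0))/allP/(_ v1 (in_vals v1))
  /allP/(_ v2 (in_vals v2)).
have hE : [&& E 0%N == 0, E 1%N == 0 & E 2%N == 0] by rewrite h0 h1 h2 eqxx.
move=> /implyP/(_ hE).
by case/orP => [/eqP -> | /and3P [/eqP -> /eqP -> /eqP ->]]; [left | right].
Qed.

Definition i1 : 'I_3 := @Ordinal 3 1 isT.
Definition i2 : 'I_3 := @Ordinal 3 2 isT.
Definition c3 n (x : 'cV['F_2]_3) : 'M['F_2]_(3, n) :=
  \matrix_(i < 3, j < n) f3 (x ord0 ord0) (x i1 ord0) (x i2 ord0) i j.

Lemma col3_eq (x y : 'cV['F_2]_3) : x ord0 ord0 = y ord0 ord0 ->
  x i1 ord0 = y i1 ord0 -> x i2 ord0 = y i2 ord0 -> x = y.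
Proof.
move=> h0 h1 h2; apply/matrixP => i j; rewrite [j]ord1.
case: i => [[|[|[|?]]] Hi] //.
- by have -> : Ordinal Hi = ord0 by apply: val_inj.
- by have -> : Ordinal Hi = i1 by apply: val_inj.
- by have -> : Ordinal Hi = i2 by apply: val_inj.
Qed.

Lemma lift01 : lift ord0 (ord0 : 'I_2) = i1. Proof. exact: val_inj. Qed.
Lemma lift02 : lift ord0 (lift ord0 (ord0 : 'I_1)) = i2. Proof. exact: val_inj. Qed.

Lemma rank33 x y : x != y -> \rank (c3 3 x - c3 3 y) = 3%N.
Proof.
move=> nxy; apply: full_of => v /matrixP h.
move: (h ord0 ord0) (h i1 ord0) (h i2 ord0).
rewrite !mxE !big_ord_recl !big_ord0 !mxE => e0 e1 e2.
case: (chk33P (x ord0 ord0) (x i1 ord0) (x i2 ord0)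
   (y ord0 ord0) (y i1 ord0) (y i2 ord0) _ _ _ e0 e1 e2).
  by case=> h0 h1 h2; case/eqP: nxy; apply: col3_eq.
case=> h0 h1 h2; apply: col3_eq; rewrite ?mxE //.
  by rewrite -lift01.
by rewrite -lift02.
Qed.

Definition chk32 := all (fun a => all (fun b => all (fun c =>
  all (fun a' => all (fun b' => all (fun c' =>
  all (fun v0 => all (fun v1 =>
  let D i j := f3 a b c i j - f3 a' b' c' i j in
  let E i := D i 0%N * v0 + (D i 1%N * v1 + 0) in
  [&& E 0%N == 0, E 1%N == 0 & E 2%N == 0] ==>
  ((a, b, c) == (a', b', c')) || [&& v0 == 0 & v1 == 0])
  vals) vals) vals) vals) vals) vals) vals) vals.

Lemma chk32_ok : chk32.
Proof. vm_compute. reflexivity. Qed.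

Lemma chk32P a b c a' b' c' v0 v1 :
  let D i j := f3 a b c i j - f3 a' b' c' i j in
  let E i := D i 0%N * v0 + (D i 1%N * v1 + 0) in
  E 0%N = 0 -> E 1%N = 0 -> E 2%N = 0 ->
  (a, b, c) = (a', b', c') \/ (v0 = 0 /\ v1 = 0).
Proof.
move=> D E h0 h1 h2.
move: chk32_ok => /allP/(_ a (in_vals a))/allP/(_ b (in_vals b))
  /allP/(_ c (in_vals c))/allP/(_ a' (in_vals a'))/allP/(_ b' (in_vals b'))
  /allP/(_ c' (in_vals c'))/allP/(_ v0 (in_vals v0))/allP/(_ v1 (in_vals v1)).
have hE : [&& E 0%N == 0, E 1%N == 0 & E 2%N == 0] by rewrite h0 h1 h2 eqxx.
move=> /implyP/(_ hE).
by case/orP => [/eqP -> | /andP [/eqP -> /eqP ->]]; [left | right].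
Qed.

Definition j1 : 'I_2 := @Ordinal 2 1 isT.

Lemma col2_eq (x y : 'cV['F_2]_2) : x ord0 ord0 = y ord0 ord0 ->
  x j1 ord0 = y j1 ord0 -> x = y.
Proof.
move=> h0 h1; apply/matrixP => i j; rewrite [j]ord1.
case: i => [[|[|?]] Hi] //.
- by have -> : Ordinal Hi = ord0 by apply: val_inj.
- by have -> : Ordinal Hi = j1 by apply: val_inj.
Qed.

Lemma lift1 : lift ord0 (ord0 : 'I_1) = j1. Proof. exact: val_inj. Qed.

Lemma rank32 x y : x != y -> \rank (c3 2 x - c3 2 y) = 2%N.
Proof.
move=> nxy; apply: full_of => v /matrixP h.
move: (h ord0 ord0) (h i1 ord0) (h i2 ord0).
rewrite !mxE !big_ord_recl !big_ord0 !mxE => e0 e1 e2.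
case: (chk32P (x ord0 ord0) (x i1 ord0) (x i2 ord0)
   (y ord0 ord0) (y i1 ord0) (y i2 ord0) _ _ e0 e1 e2).
  by case=> h0 h1 h2; case/eqP: nxy; apply: col3_eq.
case=> h0 h1; apply: col2_eq; rewrite ?mxE //.
by rewrite -lift1.
Qed.

Definition f2 (a b : 'F_2) (i j : nat) : 'F_2 :=
  match i, j with
  | 0, 0 => a | 0, _ => b
  | _, 0 => b | _, _ => a + b end.

Definition chk22 := all (fun a => all (fun b =>
  all (fun a' => all (fun b' =>
  all (fun v0 => all (fun v1 =>
  let D i j := f2 a b i j - f2 a' b' i j in
  let E i := D i 0%N * v0 + (D i 1%N * v1 + 0) in
  [&& E 0%N == 0 & E 1%N == 0] ==>
  ((a, b) == (a', b')) || [&& v0 == 0 & v1 == 0])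
  vals) vals) vals) vals) vals) vals.

Lemma chk22_ok : chk22.
Proof. vm_compute. reflexivity. Qed.

Lemma chk22P a b a' b' v0 v1 :
  let D i j := f2 a b i j - f2 a' b' i j in
  let E i := D i 0%N * v0 + (D i 1%N * v1 + 0) in
  E 0%N = 0 -> E 1%N = 0 ->
  (a, b) = (a', b') \/ (v0 = 0 /\ v1 = 0).
Proof.
move=> D E h0 h1.
move: chk22_ok => /allP/(_ a (in_vals a))/allP/(_ b (in_vals b))
  /allP/(_ a' (in_vals a'))/allP/(_ b' (in_vals b'))
  /allP/(_ v0 (in_vals v0))/allP/(_ v1 (in_vals v1)).
have hE : [&& E 0%N == 0 & E 1%N == 0] by rewrite h0 h1 eqxx.
move=> /implyP/(_ hE).
by case/orP => [/eqP -> | /andP [/eqP -> /eqP ->]]; [left | right].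
Qed.

Definition c2 (x : 'cV['F_2]_2) : 'M['F_2]_2 :=
  \matrix_(i < 2, j < 2) f2 (x ord0 ord0) (x j1 ord0) i j.

Lemma rank22 x y : x != y -> \rank (c2 x - c2 y) = 2%N.
Proof.
move=> nxy; apply: full_of => v /matrixP h.
move: (h ord0 ord0) (h j1 ord0).
rewrite !mxE !big_ord_recl !big_ord0 !mxE => e0 e1.
case: (chk22P (x ord0 ord0) (x j1 ord0)
   (y ord0 ord0) (y j1 ord0) _ _ e0 e1).
  by case=> h0 h1; case/eqP: nxy; apply: col2_eq.
case=> h0 h1; apply: col2_eq; rewrite ?mxE //.
by rewrite -lift1.
Qed.

Lemma rank11 N (x y : 'cV['F_2]_N) : x != y -> \rank (x - y) = 1%N.
Proof.
move=> nxy; apply/eqP; rewrite eqn_leq rank_leq_col lt0n mxrank_eq0 subr_eq0.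
exact: nxy.
Qed.


Lemma lower N n (c : 'cV['F_2]_N -> 'M['F_2]_(N,n)) :
  (forall x y, x != y -> \rank (c x - c y) = n) ->
  forall L' (G : 'M['F_2]_(N,n) -> 'I_L'),
  exact_dist_coloring n G -> (2 ^ N <= L')%N.
Proof.
move=> hc L' G hG.
have inj : injective (G \o c).
  move=> x y /= e; apply/eqP; apply/negPn/negP => nxy.
  exact: (hG _ _ (hc _ _ nxy) e).
by have := leq_card _ inj; rewrite card_ord card_mx card_Fp // muln1.
Qed.

Lemma upper N n' : exists G : 'M['F_2]_(N,n'.+1) -> 'I_(2 ^ N),
  exact_dist_coloring n'.+1 G.
Proof.
have hc : #|{: 'cV['F_2]_N}| = (2 ^ N)%N by rewrite card_mx card_Fp // muln1.
exists (fun M => cast_ord hc (enum_rank (col ord0 M))).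
move=> M1 M2 hr /cast_ord_inj/enum_rank_inj heq.
apply: (@not_full _ _ _ _ (delta_mx ord0 ord0) _ _ hr).
  apply/eqP => /matrixP/(_ ord0 ord0); rewrite !mxE eqxx /=.
  by apply/eqP; exact: oner_neq0.
by rewrite mulmxBl -!colE heq subrr.
Qed.

Local Close Scope ring_scope.

Theorem proposition4p2 (N n : nat) :
  ((1 <= N)%N /\ n = 1%N) \/ (N = 2%N /\ n = 2%N) \/ (N = 3%N /\ n = 2%N)
    \/ (N = 3%N /\ n = 3%N) ->
  is_chi 'F_2 N n n (2 ^ N).
Proof.
move=> [[hN ->]|[[-> ->]|[[-> ->]|[-> ->]]]]; split; try exact: upper.
- exact: (@lower N 1 id (@rank11 N)).
- exact: (@lower 2 2 c2 rank22).
- exact: (@lower 3 2 (c3 2) rank32).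
- exact: (@lower 3 3 (c3 3) rank33).
Qed.
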